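(* Let $f\colon\mathbb{R}^k_+\to\operatorname{int}(\mathbb{R}^k_+)$ be continuous and concave with respect to the cone order, with a fixed point $x^\star\in\operatorname{int}(\mathbb{R}^k_+)$. Let $U\subset\operatorname{int}(\mathbb{R}^k_+)$ be a compact neighborhood of $x^\star$, and let $c\in[0,1)$ be a local contraction factor of $f$ on $U$, i.e., $d_T(f(x),f(y))\le c\,d_T(x,y)$ for all $x,y\in U$. Let $\rho=\rho(f_\infty)$ be the spectral radius of the asymptotic mapping of $f$. Then $c\ge\rho$.
   Context: $\mathbb{R}^k_+$ is the nonnegative orthant, $\operatorname{int}(\mathbb{R}^k_+)$ the vectors with strictly positive coordinates, $x\le y$ means $y-x\in\mathbb{R}^k_+$. Concavity w.r.t. the cone order: $f(tx+(1-t)y)\ge tf(x)+(1-t)f(y)$ for $x,y\in\mathbb{R}^k_+$, $t\in(0,1)$. Thompson's metric: $d_T(x,y)=\ln\max\{M(x,y),M(y,x)\}$, $M(x,y)=\inf\{\beta>0:x\le\beta y\}$. The asymptotic mapping of $f$ is $f_\infty\colon\mathbb{R}^k_+\to\mathbb{R}^k_+$, $f_\infty(x)=\lim_{p\to\infty}\frac1p f(px)$ (this limit exists for such $f$), and its spectral radius is $\rho(f_\infty)=\max\{\lambda\ge 0: \exists x\in\mathbb{R}^k_+\setminus\{0\},\ f_\infty(x)=\lambda x\}$ (this maximum exists). Compactness and neighborhoods refer to the usual topology of $\mathbb{R}^k$. *)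

(* Defs.v *)
From HB Require Import structures.
From mathcomp Require Import all_boot all_order all_algebra.
From mathcomp Require Import all_classical all_reals all_analysis.
Set Implicit Arguments. Unset Strict Implicit. Unset Printing Implicit Defensive.
Import Order.TTheory GRing.Theory Num.Theory.
Import numFieldNormedType.Exports.
Local Open Scope classical_set_scope.
Local Open Scope ring_scope.

Section Defs.
Variables (R : realType) (k : nat).
Implicit Types (x y : 'rV[R]_k) (f : 'rV[R]_k -> 'rV[R]_k).

Definition orthant : set 'rV[R]_k := [set x | forall i, 0 <= x ord0 i].
Definition int_orthant : set 'rV[R]_k := [set x | forall i, 0 < x ord0 i].
Definition cone_le x y : Prop := orthant (y - x).

Definition cone_concave f : Prop :=
  forall x y (t : R), orthant x -> orthant y -> 0 < t < 1 ->
    cone_le (t *: f x + (1 - t) *: f y) (f (t *: x + (1 - t) *: y)).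

Definition Mth x y : R := inf [set b : R | 0 < b /\ cone_le x (b *: y)].

Definition thompson x y : R := ln (Num.max (Mth x y) (Mth y x)).

Definition asymptotic f : 'rV[R]_k -> 'rV[R]_k :=
  fun x => lim ((fun p : R => p^-1 *: f (p *: x)) @ +oo).

Definition spectral_radius (g : 'rV[R]_k -> 'rV[R]_k) : R :=
  sup [set l : R | 0 <= l /\ exists x, orthant x /\ x != 0 /\ g x = l *: x].

End Defs.

(* Main.v *)
Require Import Defs.
From HB Require Import structures.
From mathcomp Require Import all_boot all_order all_algebra.
From mathcomp Require Import all_classical all_reals all_analysis.
From mathcomp Require Import ring lra.
Import Order.TTheory GRing.Theory Num.Theory.
Import numFieldNormedType.Exports.
Local Open Scope classical_set_scope.
Local Open Scope ring_scope.
Set Implicit Arguments. Unset Strict Implicit.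
Lemma real_lim (R : realType) (a b x : R) : 0 <= x ->
  (forall u, 0 < u -> u < 1 -> b - u * x <= a) -> b <= a.
Proof.
move=> x0 H; case: (leP b a) => // ab; exfalso.
have hd : 0 < 2 * (b - a + x) by lra.
set u := (b - a) / (2 * (b - a + x)).
have hu : u * (2 * (b - a + x)) = b - a by rewrite /u mulfVK // gt_eqF.
have u0 : 0 < u by rewrite /u divr_gt0 // subr_gt0.
have u1 : u < 1 by nra.
have := H u u0 u1; nra.
Qed.

Lemma argmax_ex (R : realType) (k : nat) (F : 'I_k -> R) (i0 : 'I_k) :
  exists j, forall i, F i <= F j.
Proof.
case: (@arg_maxP _ _ _ i0 xpredT F isT) => j _ H.
by exists j => i; exact: H.
Qed.

Lemma Mth_le (R : realType) (k : nat) (x y : 'rV[R]_k) b :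
  0 < b -> cone_le x (b *: y) -> Mth x y <= b.
Proof.
move=> b0 hb; rewrite /Mth.
apply: (ge_inf _) => //; first by exists 0 => z [z0 _]; exact: ltW.
Qed.

Lemma Mth_ge (R : realType) (k : nat) (x y : 'rV[R]_k) (i : 'I_k) m :
  (exists b, 0 < b /\ cone_le x (b *: y)) -> 0 < y ord0 i ->
  m * y ord0 i <= x ord0 i -> m <= Mth x y.
Proof.
move=> [b hb] yi hm; rewrite /Mth; apply: lb_le_inf; first by exists b.
move=> z [z0 hz]; have := hz i; rewrite !mxE subr_ge0 => hzi.
by rewrite -(ler_pM2r yi) (le_trans hm).
Qed.

Lemma exists_bound (R : realType) (k : nat) (x y : 'rV[R]_k) (i0 : 'I_k) :
  int_orthant y -> exists b, 0 < b /\ cone_le x (b *: y).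
Proof.
move=> hy; have [j hj] := @argmax_ex _ _ (fun i => x ord0 i / y ord0 i) i0.
exists (1 + `|x ord0 j / y ord0 j|); split; first by rewrite ltr_pwDl.
move=> i; rewrite !mxE subr_ge0.
have yi := hy i.
have := hj i => /= hi.
have : x ord0 i / y ord0 i <= 1 + `|x ord0 j / y ord0 j|.
  by rewrite (le_trans hi) // (le_trans (ler_norm _)) // lerDr.
by rewrite ler_pdivrMr.
Qed.

Lemma f_mono (R : realType) (k : nat) (f : 'rV[R]_k -> 'rV[R]_k) :
  (forall x, orthant x -> int_orthant (f x)) -> cone_concave f ->
  forall x y, orthant x -> cone_le x y -> cone_le (f x) (f y).
Proof.
move=> fpos fc x y ox xy i; rewrite !mxE subr_ge0.
apply: (@real_lim _ _ _ (f x ord0 i)); first exact/ltW/fpos.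
move=> u u0 u1.
set z := x + u^-1 *: (y - x).
have oz : orthant z.
  move=> j; rewrite !mxE; have := xy j; rewrite !mxE => h.
  apply: addr_ge0; first exact: ox.
  by apply: mulr_ge0 => //; rewrite invr_ge0 ltW.
have e : (1 - u) *: x + (1 - (1 - u)) *: z = y.
  apply/rowP => j; rewrite !mxE; field; by rewrite gt_eqF.
have h01 : 0 < 1 - u < 1 by apply/andP; split; lra.
have := fc x z (1 - u) ox oz h01; rewrite e => /(_ i); rewrite !mxE subr_ge0 => H.
have := fpos z oz i => fz.
nra.
Qed.

Lemma h_mono (R : realType) (k : nat) (f : 'rV[R]_k -> 'rV[R]_k) (v : 'rV[R]_k) i p q :
  (forall x, orthant x -> int_orthant (f x)) -> cone_concave f -> orthant v ->
  0 < q -> q <= p -> p^-1 * f (p *: v) ord0 i <= q^-1 * f (q *: v) ord0 i.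
Proof.
move=> fpos fc ov q0 qp.
have p0 : 0 < p by exact: lt_le_trans qp.
case: (eqVneq q p) => [->|qnp]; first exact: lexx.
have qp' : q < p by rewrite lt_neqAle qnp.
set t := q / p.
have t01 : 0 < t < 1.
  apply/andP; split; first by rewrite divr_gt0.
  by rewrite ltr_pdivrMr // mul1r.
have opv : orthant (p *: v) by move=> j; rewrite mxE mulr_ge0 // ?ltW //; exact: ov.
have o0 : orthant (0 : 'rV[R]_k) by move=> j; rewrite mxE.
have := fc _ _ t opv o0 t01.
have -> : t *: (p *: v) + (1 - t) *: 0 = q *: v.
  by rewrite scaler0 addr0 scalerA /t divfK // gt_eqF.
move=> /(_ i); rewrite !mxE subr_ge0 => H.
have f0 := fpos 0 o0 i.
have t1 : 0 < 1 - t by move: t01 => /andP[_]; rewrite subr_gt0.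
have H2 : t * f (p *: v) ord0 i <= f (q *: v) ord0 i.
  apply: le_trans H; rewrite lerDl mulr_ge0 // ltW //.
rewrite -(ler_pM2l q0) [q * (q^-1 * _)]mulrA mulfV ?gt_eqF // mul1r.
by rewrite mulrA.
Qed.

Lemma coord_lim (R : realType) (u : R -> R) :
  (forall q p, 0 < q -> q <= p -> u p <= u q) -> (forall p, 0 < p -> 0 <= u p) ->
  exists l, (u r @[r --> +oo] --> l) /\ forall p, 0 < p -> l <= u p.
Proof.
move=> um u0.
set g := fun r => - u (Num.max r 1).
have m0 : forall r : R, 0 < Num.max r 1 by move=> r; rewrite lt_max ltr01 orbT.
have gnd : nondecreasing_fun g.
  move=> r r' rr'; rewrite /g lerN2; apply: um => //.
  by rewrite ge_max !le_max rr' lexx !orbT.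
have gub : has_ubound (range g).
  by exists 0 => _ [r _ <-]; rewrite /g oppr_le0; apply: u0.
have cg := nondecreasing_cvgr gnd gub.
exists (- sup (range g)); split.
- have E : \forall r \near +oo, - g r = u r.
    apply: filterS (nbhs_pinfty_ge (num_real 1)) => r hr.
    by rewrite /g opprK max_l.
  apply: cvg_trans (near_eq_cvg E) _; exact: cvgN cg.
- move=> p p0; rewrite lerNl; apply: (@le_trans _ _ (g p)).
    by rewrite /g lerN2; apply: um => //; rewrite le_max lexx.
  by apply: ub_le_sup => //; exists p.
Qed.

Lemma vec_lim (R : realType) (k : nat) (h : R -> 'rV[R]_k) :
  (forall i, exists l, (h r ord0 i @[r --> +oo] --> l) /\ forall p, 0 < p -> l <= h p ord0 i) ->
  exists L : 'rV[R]_k, (h r @[r --> +oo] --> L) /\ forall p i, 0 < p -> L ord0 i <= h p ord0 i.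
Proof.
move=> H; have [l Hl] := choice H.
exists (\row_i l i); split; last by move=> p i p0; rewrite mxE; exact: (Hl i).2.
apply/cvgrPdist_le => /= e e0.
near=> r.
rewrite /Num.Def.normr/= mx_normrE (bigmax_le _ (ltW e0))//= => -[a b] _.
rewrite (ord1 a) !mxE.
move: b; near: r; apply: filter_forall => b.
exact: ((cvgrPdist_le _ _).1 (Hl b).1 e e0).
Unshelve. all: by end_near. Qed.

Lemma asym_le (R : realType) (k : nat) (f : 'rV[R]_k -> 'rV[R]_k) (v : 'rV[R]_k) :
  (forall x, orthant x -> int_orthant (f x)) -> cone_concave f -> orthant v ->
  forall p i, 0 < p -> asymptotic f v ord0 i <= p^-1 * f (p *: v) ord0 i.
Proof.
move=> fpos fc ov.
have [L [cL HL]] := @vec_lim _ _ (fun p => p^-1 *: f (p *: v)) (fun i =>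
  @coord_lim _ (fun r => (r^-1 *: f (r *: v)) ord0 i)
    (fun q p q0 qp => ltac:(cbv beta; rewrite !mxE; exact: h_mono))
    (fun p p0 => ltac:(cbv beta; rewrite mxE; apply: mulr_ge0; [by rewrite invr_ge0 ltW|
       apply: ltW; apply: fpos => j; rewrite mxE mulr_ge0 // ?ltW //; exact: ov]))).
move=> p i p0; rewrite /asymptotic (cvg_lim _ cL) //.
by have := HL p i p0; rewrite mxE.
Qed.

Lemma ln_lower (R : realType) (w : R) : 0 <= w -> w / (1 + w) <= ln (1 + w).
Proof.
move=> w0; have p : 0 < 1 + w by lra.
have h : -1 < (1 + w)^-1 - 1 by have := invr_gt0 (1 + w); rewrite p => /= ?; lra.
have := le_ln1Dx h; rewrite (addrC 1) subrK lnV ?posrE // => H.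
have e : w / (1 + w) = 1 - (1 + w)^-1 by field; rewrite gt_eqF.
rewrite e; lra.
Qed.

Unset Implicit Arguments. Set Strict Implicit.

Theorem proposition4 (R : realType) (k : nat) (f : 'rV[R]_k -> 'rV[R]_k)
  (xstar : 'rV[R]_k) (U : set 'rV[R]_k) (c : R) :
  (forall x, orthant x -> int_orthant (f x)) ->
  {within orthant (R:=R) (k:=k), continuous f} ->
  cone_concave f ->
  int_orthant xstar -> f xstar = xstar ->
  compact U -> U `<=` int_orthant (R:=R) (k:=k) -> nbhs xstar U ->
  0 <= c -> c < 1 ->
  (forall x y, U x -> U y -> thompson (f x) (f y) <= c * thompson x y) ->
  spectral_radius (asymptotic f) <= c.
Proof.
move=> fpos fcont fc xs_pos fxs cU Upos nU c0 c1 contr.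
rewrite /spectral_radius.
set S := [set l | _].
case: (pselect (S !=set0)) => [Sne|Sne]; last by rewrite sup_out // => -[].
apply: ge_sup => // l [l0 [v [ov [vn0 Hv]]]].
rewrite leNgt; apply/negP => cl.
have [i0 vi0] : exists i, v ord0 i != 0.
  case: (pselect (exists i, v ord0 i != 0)) => // /forallNP H.
  move: vn0; have -> : v = 0.
    by apply/rowP => j; rewrite mxE; have := H j; move=> /negP; rewrite negbK => /eqP.
  by rewrite eqxx.
have [j hj] := @argmax_ex _ _ (fun i => v ord0 i / xstar ord0 i) i0.
set al := v ord0 j / xstar ord0 j.
have xj := xs_pos j.
have al0 : 0 < al.
  have vi : 0 < v ord0 i0 by rewrite lt0r vi0 ov.
  have := hj i0 => /= h; apply: lt_le_trans h.
  by rewrite divr_gt0 // xs_pos.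
have vle : forall i, v ord0 i <= al * xstar ord0 i.
  move=> i; have := hj i => /= h.
  by rewrite -ler_pdivrMr; [exact: h| exact: xs_pos].
have valj : v ord0 j = al * xstar ord0 j by rewrite /al divfK // gt_eqF.
have oxs : orthant xstar by move=> m; exact/ltW/xs_pos.
have key : forall s, 0 < s -> forall i,
    xstar ord0 i + s * (l * v ord0 i) <= f (xstar + s *: v) ord0 i.
  move=> s s0 i.
  apply: (@real_lim _ _ _ (xstar ord0 i)); first exact/ltW/xs_pos.
  move=> u u0 u1.
  set p := s / u.
  have p0 : 0 < p by rewrite divr_gt0.
  have opv : orthant (p *: v) by move=> m; rewrite mxE mulr_ge0 // ?ltW //; exact: ov.
  have h01 : 0 < 1 - u < 1 by apply/andP; split; lra.
  have := fc xstar (p *: v) (1 - u) oxs opv h01 => /(_ i).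
  rewrite !mxE subr_ge0 fxs => H.
  set z := (1 - u) *: xstar + (1 - (1 - u)) *: (p *: v).
  have up : u * p = s by rewrite /p mulrC divfK // gt_eqF.
  have oz : orthant z.
    move=> m; rewrite !mxE; apply: addr_ge0; apply: mulr_ge0; try lra.
    - exact: oxs.
    - by apply: mulr_ge0; [exact: ltW| exact: ov].
  have zle : cone_le z (xstar + s *: v).
    move=> m; rewrite !mxE.
    have e1 : 1 - (1 - u) = u by lra.
    rewrite e1 mulrA up; have := oxs m; nra.
  have := f_mono fpos fc oz zle i; rewrite !mxE subr_ge0 => Hm.
  have A := asym_le fpos fc ov i p0; rewrite Hv mxE in A.
  have e2 : u * f (p *: v) ord0 i = s * (p^-1 * f (p *: v) ord0 i).
    by rewrite -up; field; rewrite gt_eqF.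
  have B : s * (l * v ord0 i) <= s * (p^-1 * f (p *: v) ord0 i) by rewrite ler_pM2l.
  have e1 : 1 - (1 - u) = u by lra.
  have e3 : (1 - (1 - u)) * f (p *: v) ord0 i = s * (p^-1 * f (p *: v) ord0 i) by rewrite e1.
  have : (1 - u) * xstar ord0 i = xstar ord0 i - u * xstar ord0 i by ring.
  lra.
have est : forall s, 0 < s -> U (xstar + s *: v) ->
    ln (1 + s * (l * al)) <= c * ln (1 + s * al).
  move=> s s0 Us.
  have Ux : U xstar := nbhs_singleton nU.
  have := contr _ _ Us Ux; rewrite fxs => Hc.
  have p1 : 0 < 1 + s * al by have := mulr_gt0 s0 al0; lra.
  have lp : 0 < l by lra.
  have p2 : 0 < 1 + s * (l * al) by have := mulr_gt0 s0 (mulr_gt0 lp al0); lra.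
  have bnd1 : cone_le (xstar + s *: v) ((1 + s * al) *: xstar).
    move=> m; rewrite !mxE subr_ge0; have := vle m; have := xs_pos m; nra.
  have M1le := Mth_le p1 bnd1.
  have M2le : Mth xstar (xstar + s *: v) <= 1.
    apply: Mth_le => // m; rewrite !mxE subr_ge0; have := ov m; nra.
  have M1ge : 1 <= Mth (xstar + s *: v) xstar.
    apply: (Mth_ge (i := j)); [by exists (1 + s * al)| done|].
    rewrite !mxE; have := ov j; nra.
  have T1 : thompson (xstar + s *: v) xstar <= ln (1 + s * al).
    rewrite /thompson ler_ln ?posrE //.
      by rewrite ge_max M1le (le_trans M2le) // lerDl mulr_ge0 // ltW.
    by rewrite lt_max (lt_le_trans ltr01 M1ge).
  have M3ge : 1 + s * (l * al) <= Mth (f (xstar + s *: v)) xstar.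
    apply: (Mth_ge (i := j)); [exact: exists_bound i0 xs_pos| done|].
    have := key s s0 j; rewrite valj.
    have -> : (1 + s * (l * al)) * xstar ord0 j = xstar ord0 j + s * (l * (al * xstar ord0 j)) by ring.
    done.
  have T2 : ln (1 + s * (l * al)) <= thompson (f (xstar + s *: v)) xstar.
    rewrite /thompson ler_ln ?posrE //.
      by rewrite le_max M3ge.
    by rewrite lt_max (lt_le_trans p2 M3ge).
  apply: (le_trans T2); apply: (le_trans Hc); exact: ler_wpM2l.
move/nbhs_ballP: nU => [e e0 He].
set s := Num.min (e / (`|v| + 1)) ((l - c) / (2 * (c * l * al + 1))).
have nv := normr_ge0 v.
have lp : 0 < l by lra.
have clal : 0 <= c * l * al := mulr_ge0 (mulr_ge0 c0 (ltW lp)) (ltW al0).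
have s0 : 0 < s.
  rewrite lt_min; apply/andP; split; rewrite divr_gt0 //; lra.
have sa : s * (`|v| + 1) <= e.
  rewrite -ler_pdivlMr; last lra.
  by rewrite /s ge_min lexx.
have sb : s * (2 * (c * l * al + 1)) <= l - c.
  rewrite -ler_pdivlMr; last lra.
  by rewrite /s ge_min lexx orbT.
have Us : U (xstar + s *: v).
  apply: He; rewrite -ball_normE /ball_ /= opprD addrA subrr add0r normrN normrZ gtr0_norm //.
  nra.
have H := est s s0 Us.
have L1 : ln (1 + s * al) <= s * al by apply: le_ln1Dx; have := mulr_gt0 s0 al0; lra.
have w0 : 0 <= s * (l * al) := mulr_ge0 (ltW s0) (mulr_ge0 (ltW lp) (ltW al0)).
have L2 := ln_lower w0.
have H2 : s * (l * al) / (1 + s * (l * al)) <= c * (s * al).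
  apply: (le_trans L2); apply: (le_trans H); exact: ler_wpM2l.
have p2 : 0 < 1 + s * (l * al) by lra.
rewrite ler_pdivrMr // in H2.
have sal : 0 < s * al by rewrite mulr_gt0.
have H3 : (s * al) * l <= (s * al) * (c * (1 + s * (l * al))).
  have -> : (s * al) * l = s * (l * al) by ring.
  have -> : (s * al) * (c * (1 + s * (l * al))) = c * (s * al) * (1 + s * (l * al)) by ring.
  exact: H2.
rewrite ler_pM2l // in H3.
have : c * (s * (l * al)) = (c * l * al) * s by ring.
nra.
Qed.
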